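(* Suppose Assumptions A1, A2 (SDSD) and A3 hold for a given steady state $(x^s,u^s)$ and $\gamma\in(0,1)$. Then $(x^s,u^s)$ is a minimizer of the optimal steady-state problem $$\min_{x,u}\ \tilde L^\gamma(x,u)\quad\text{s.t.}\quad x=f(x,u),$$ where $\tilde L^\gamma(x,u):=L(x,u)+(\gamma-1)V_\star^\gamma(f(x,u))$.
   Context: Setting: discrete-time system $x_+=f(x,u)$ with $x\in\mathbb{R}^{n_x}$, $u\in\mathbb{R}^{n_u}$, stage cost $L(x,u)$, constraint set $\mathbb{Z}:=\{(x,u): h(x,u)\le 0\}$, with the convention $L(x,u)=\infty$ for $(x,u)\notin\mathbb{Z}$, and discount factor $\gamma\in(0,1)$. For a policy $\pi$ the closed-loop trajectory is $x_{k+1}^\pi=f(x_k^\pi,\pi(x_k^\pi))$, $x_0^\pi=x_0$. $\mathbb{X}_0:=\{x_0:\exists\pi \text{ with } h(x_k^\pi,\pi(x_k^\pi))\le0\ \forall k\ge0\}$ and $\Pi:=\{\pi: h(x_k^\pi,\pi(x_k^\pi))\le 0\ \forall x_0\in\mathbb{X}_0,\forall k\ge 0\}$. The optimal value function is $V_\star^\gamma(x_0):=\min_{\pi\in\Pi}\sum_{k=0}^\infty\gamma^kL(x_k^\pi,\pi(x_k^\pi))$ and $\pi_\star^\gamma$ denotes an optimal policy. $(x^s,u^s)$ is a steady state, $x^s=f(x^s,u^s)$, normalized so that $L(x^s,u^s)=0$. Assumption A1: $\mathbb{Z}$ and $\mathbb{X}_0$ are compact and $|L(x,u)|<\infty$ for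 all $(x,u)\in\mathbb{Z}$. Assumption A2 (Strong Discounted Strict Dissipativity, SDSD): there exist a function $\lambda$, continuous at $x^s$, bounded on bounded sets, with $\lambda(x^s)=0$, and $\rho\in\mathcal{K}$ such that for all $(x,u)\in\mathbb{Z}$: (i) $L(x,u)+\lambda(x)-\gamma\lambda(f(x,u))\ge\rho(\|x-x^s\|)$; (ii) $L(x,u)+\lambda(x)-\lambda(f(x,u))+(\gamma-1)V_\star^\gamma(f(x,u))\ge\rho(\|x-x^s\|)$. Assumption A3: $V_\star^\gamma$ is continuous at $x^s$ and bounded on $\mathbb{X}_0$. $\mathcal{K}$ denotes continuous, strictly increasing functions $\mathbb{R}_{\ge0}\to\mathbb{R}_{\ge0}$ vanishing at $0$. *)

(* Defs.v *)
From HB Require Import structures.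
From mathcomp Require Import all_boot all_order all_algebra.
From mathcomp Require Import all_classical all_reals all_analysis.
Set Implicit Arguments. Unset Strict Implicit. Unset Printing Implicit Defensive.
Import Order.TTheory GRing.Theory Num.Theory.
Import numFieldNormedType.Exports.
Local Open Scope classical_set_scope.
Local Open Scope ring_scope.

Section Defs.
Variables (R : realType) (nx nu nh : nat).
Notation X := 'rV[R]_nx.
Notation U := 'rV[R]_nu.

Definition Zset (h : X -> U -> 'rV[R]_nh) : set (X * U) :=
  [set z | forall i, h z.1 z.2 0 i <= 0].

Fixpoint traj (f : X -> U -> X) (pi : X -> U) (x0 : X) (k : nat) : X :=
  match k with
  | O => x0
  | S k' => let x := traj f pi x0 k' in f x (pi x)
  end.

Definition X0set (f : X -> U -> X) (h : X -> U -> 'rV[R]_nh) : set X :=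
  [set x0 | exists pi : X -> U, forall k,
     Zset h (traj f pi x0 k, pi (traj f pi x0 k))].

Definition Pi (f : X -> U -> X) (h : X -> U -> 'rV[R]_nh) : set (X -> U) :=
  [set pi | forall x0, X0set f h x0 -> forall k,
     Zset h (traj f pi x0 k, pi (traj f pi x0 k))].

Definition Jcost (f : X -> U -> X) (L : X -> U -> \bar R) (gamma : R)
    (pi : X -> U) (x0 : X) : \bar R :=
  limn (fun n => (\sum_(0 <= k < n)
        ((gamma ^+ k)%:E * L (traj f pi x0 k) (pi (traj f pi x0 k))))%E).

Definition Vstar (f : X -> U -> X) (h : X -> U -> 'rV[R]_nh)
    (L : X -> U -> \bar R) (gamma : R) (x0 : X) : \bar R :=
  ereal_inf [set Jcost f L gamma pi x0 | pi in Pi f h].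

Definition Ltilde (f : X -> U -> X) (h : X -> U -> 'rV[R]_nh)
    (L : X -> U -> \bar R) (gamma : R) (x : X) (u : U) : \bar R :=
  (L x u + (gamma - 1)%:E * Vstar f h L gamma (f x u))%E.
End Defs.

Definition classK (R : realType) (rho : R -> R) : Prop :=
  [/\ rho 0 = 0,
      (forall r, 0 <= r -> 0 <= rho r),
      (forall r s, 0 <= r -> r < s -> rho r < rho s) &
      {within `[0, +oo[%classic, continuous rho}].

(* Main.v *)
Require Import Defs.
From HB Require Import structures.
From mathcomp Require Import all_boot all_order all_algebra.
From mathcomp Require Import all_classical all_reals all_analysis.
From mathcomp Require Import lra.
Import Order.TTheory GRing.Theory Num.Theory.
Import numFieldNormedType.Exports.
Local Open Scope classical_set_scope.
Local Open Scope ring_scope.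


Lemma limn_ge0 (R : realType) (S : nat -> \bar R) (M : R) (g : R) :
  0 < g < 1 -> (forall n, ((- (g ^+ n * M))%:E <= S n)%E) -> (0 <= limn S)%E.
Proof.
move=> /andP[g0 g1] hS.
have [cS|nc] := pselect (cvgn S).
  have cf : (fun n => (- (g ^+ n * M))%:E) @ \oo --> (0:R)%:E.
    apply/fine_cvgP; split; first by apply: nearW.
    rewrite /comp /=. rewrite -oppr0 -(mul0r M).
    apply: cvgN; apply: cvgMl; apply: cvg_expr.
    by rewrite ger0_norm ?ltW.
  have H := @lee_lim _ _ _ _ (fun n => (- (g ^+ n * M))%:E) S (cvgP _ cf) cS (nearW _ hS).
  have := H _ _; rewrite (cvg_lim _ cf) //; apply; exact: _.
- rewrite /lim /lim_in xgetPN // => l Sl; apply: nc; apply/cvg_ex; by exists l.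
Qed.

Theorem theorem4 (R : realType) (nx nu nh : nat)
  (f : 'rV[R]_nx -> 'rV[R]_nu -> 'rV[R]_nx)
  (h : 'rV[R]_nx -> 'rV[R]_nu -> 'rV[R]_nh)
  (L : 'rV[R]_nx -> 'rV[R]_nu -> \bar R)
  (gamma : R) (xs : 'rV[R]_nx) (us : 'rV[R]_nu)
  (hgamma : 0 < gamma < 1)
  (* convention L = +oo outside Z *)
  (hLout : forall x u, ~ Zset h (x, u) -> L x u = +oo%E)
  (* steady state, normalized *)
  (hss : xs = f xs us) (hL0 : L xs us = 0%E)
  (* A1 *)
  (A1Z : compact (Zset h)) (A1X0 : compact (X0set f h))
  (A1L : forall x u, Zset h (x, u) -> L x u \is a fin_num)
  (* A2 (SDSD) *)
  (A2 : exists (lambda : 'rV[R]_nx -> R) (rho : R -> R),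
     {for xs, continuous lambda} /\
         (forall B, bounded_set B -> bounded_set (lambda @` B)) /\
         lambda xs = 0 /\
         classK rho /\
         (forall x u, Zset h (x, u) ->
            (L x u + (lambda x)%:E - (gamma * lambda (f x u))%:E
               >= (rho `|x - xs|)%:E)%E) /\
         (forall x u, Zset h (x, u) ->
            (L x u + (lambda x - lambda (f x u))%:E
               + (gamma - 1)%:E * Vstar f h L gamma (f x u)
               >= (rho `|x - xs|)%:E)%E))
  (* A3 *)
  (A3c : {for xs, continuous (Vstar f h L gamma)})
  (A3b : exists M : R, forall x, X0set f h x ->
            (`|Vstar f h L gamma x| <= M%:E)%E) :
  forall x u, Zset h (x, u) -> x = f x u ->
    (Ltilde f h L gamma xs us <= Ltilde f h L gamma x u)%E.

Proof.
move=> x u hZ hx.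
have [lambda [rho [_ [hlb [hl0 [hK [hi hii]]]]]]] := A2.
case: hK => rho0 rhoge _ _.
have Zs : Zset h (xs, us).
  by apply: contrapT => /hLout; rewrite hL0.
have trs : forall k, traj f (fun=> us) xs k = xs.
  by elim=> //= k ->; rewrite -hss.
have X0s : X0set f h xs by exists (fun=> us) => k; rewrite trs.
have : bounded_set (lambda @` (fst @` Zset h)).
  apply: hlb; apply: compact_bounded; apply: continuous_compact => //.
  apply: continuous_subspaceT => p; exact: cvg_fst.
rewrite /= /bounded_near => /pinfty_ex_gt0 [M M0 hM].
have hlam a b : Zset h (a, b) -> `|lambda a| <= M.
  by move=> Zab; apply: hM; exists a => //; exists (a, b).
have [g0 g1] := andP hgamma.
have V0 : (0 <= Vstar f h L gamma xs)%E.
  apply/ereal_infP => _ [pi Ppi <-].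
  have Zk := Ppi xs X0s.
  set tr := traj f pi xs.
  have Lfin k : L (tr k) (pi (tr k)) = (fine (L (tr k) (pi (tr k))))%:E.
    by rewrite fineK // A1L.
  apply: (@limn_ge0 _ _ M gamma) => // n.
  rewrite (eq_bigr (fun k => (gamma ^+ k * fine (L (tr k) (pi (tr k))))%:E));
    last by move=> k _; rewrite Lfin.
  rewrite sumEFin lee_fin.
  have key : forall m, gamma ^+ m * lambda (tr m) <=
      \sum_(0 <= k < m) gamma ^+ k * fine (L (tr k) (pi (tr k))).
    elim=> [|m IH]; first by rewrite big_geq // expr0 mul1r /tr /= hl0.
    rewrite big_nat_recr //=.
    have him := hi _ _ (Zk m).
    change (traj f pi xs) with tr in him.
    rewrite Lfin in him.
    have {}him : ((rho `|tr m - xs|)%:E <= (fine (L (tr m) (pi (tr m))) + lambda (tr m)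
              - gamma * lambda (f (tr m) (pi (tr m))))%:E)%E := him.
    rewrite lee_fin in him.
    have r0 := rhoge `|tr m - xs| (normr_ge0 _).
    have : 0 <= gamma ^+ m * (fine (L (tr m) (pi (tr m))) + lambda (tr m)
              - gamma * lambda (f (tr m) (pi (tr m)))).
      by apply: mulr_ge0; [exact: exprn_ge0 (ltW g0)| exact: le_trans him].
    have -> : tr m.+1 = f (tr m) (pi (tr m)) by [].
    rewrite exprSr; nra.
  apply: le_trans (key n).
  rewrite -mulrN; apply: ler_wpM2l; first exact: exprn_ge0 (ltW g0).
  by have := hlam _ _ (Zk n); rewrite ler_norml => /andP[].
rewrite /Ltilde -hss hL0 add0e.
have h2 := hii x u hZ.
rewrite -hx subrr adde0 in h2.
rewrite -hx.
apply: (@le_trans _ _ 0%E); first by apply: mule_le0_ge0 => //; rewrite lee_fin; lra.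
apply: le_trans h2; rewrite lee_fin; apply: rhoge; exact: normr_ge0.
Qed.
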